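(* Consider the packet spreading algorithm described in the context with $N=2$ and $K_1\ge K_2$. Then $x_n^{K-1}=K_n$ for $n=1,2$; that is, the output pattern $P$ of length $K=K_1+K_2$ contains exactly $K_n$ occurrences of source $n$.
   Context: Packet spreading algorithm: Let $N\ge 2$, let $K_1,\dots,K_N$ be positive integers and $K=\sum_{n=1}^N K_n$. The algorithm runs iterations $k=0,1,\dots,K-1$ and maintains deficit counters $B_n^k$, $1\le n\le N$, with $B_n^0=0$ for all $n$. In iteration $k$, define the quantums $Q_n^k=\frac{(1-B_n^k)K}{K_n}$; select a source $m_k\in\arg\min_{1\le n\le N} Q_n^k$ (ties broken arbitrarily); let $Q=Q_{m_k}^k$; set $B_n^{k+1}=B_n^k+Q\frac{K_n}{K}$ for $n\neq m_k$ and $B_{m_k}^{k+1}=0$; and set the $k$-th entry of the output pattern to $P(k)=m_k$. For $0\le k\le K-1$, $x_n^k$ denotes the number of indices $k'\in\{0,\dots,k\}$ with $m_{k'}=n$, i.e. the number of source-$n$ instances inserted into the pattern after iteration $k$. *)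

(* Defs.v *)
From mathcomp Require Import all_boot all_order all_algebra.
Set Implicit Arguments. Unset Strict Implicit. Unset Printing Implicit Defensive.
Import Order.TTheory GRing.Theory Num.Theory.
Local Open Scope ring_scope.

(* Sources are indexed by 'I_N
   (ordinal i stands for source i+1 of the paper).  Ks n = K_n,
   m k = the source m_k selected in iteration k (a sequence of choices,
   ties being broken arbitrarily: any sequence of argmin choices is allowed). *)

Definition totK (N : nat) (Ks : 'I_N -> nat) : nat := (\sum_(n < N) Ks n)%N.

Definition quantum (R : realFieldType) (K Kn : nat) (b : R) : R :=
  (1 - b) * K%:R / Kn%:R.

Fixpoint deficit (R : realFieldType) (N : nat) (Ks : 'I_N -> nat)
    (m : nat -> 'I_N) (k : nat) : 'I_N -> R :=
  match k with
  | 0 => fun _ => 0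
  | k'.+1 =>
      let Bk := deficit R Ks m k' in
      let Q := quantum (totK Ks) (Ks (m k')) (Bk (m k')) in
      fun n => if n == m k' then 0
               else Bk n + Q * (Ks n)%:R / (totK Ks)%:R
  end.

Definition valid_run (R : realFieldType) (N : nat) (Ks : 'I_N -> nat)
    (m : nat -> 'I_N) : Prop :=
  forall k : nat, (k < totK Ks)%N -> forall n : 'I_N,
    quantum (totK Ks) (Ks (m k)) (deficit R Ks m k (m k))
      <= quantum (totK Ks) (Ks n) (deficit R Ks m k n).

Definition xcount (N : nat) (m : nat -> 'I_N) (n : 'I_N) (k : nat) : nat :=
  count (fun k' => m k' == n) (iota 0 k.+1).

(* Main.v *)
Require Import Defs.
From mathcomp Require Import all_boot all_order all_algebra.
From mathcomp Require Import ring lra zify.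
Set Implicit Arguments. Unset Strict Implicit. Unset Printing Implicit Defensive.
Import Order.TTheory GRing.Theory Num.Theory.
Local Open Scope ring_scope.

Section S.
Variables (R : realFieldType) (Ks : 'I_2 -> nat) (m : nat -> 'I_2).
Hypothesis Kpos : forall n, (0 < Ks n)%N.
Let c0 : 'I_2 := @Ordinal 2 0 is_true_true.
Let c1 : 'I_2 := @Ordinal 2 1 is_true_true.

Definition xx k n := count (fun k' => m k' == n) (iota 0 k).

Lemma I2 (i : 'I_2) : i = c0 \/ i = c1.
Proof. case: i => [[|[|]]] // H; [left|right]; exact: val_inj. Qed.

Lemma totKE : totK Ks = (Ks c0 + Ks c1)%N.
Proof. rewrite /totK big_ord_recr /= big_ord_recr big_ord0 /= add0n.
by congr (Ks _ + Ks _)%N; apply: val_inj. Qed.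

Lemma xxS k n : xx k.+1 n = (xx k n + (m k == n))%N.
Proof. by rewrite /xx -[k.+1]addn1 iotaD count_cat /= addn0 add0n. Qed.

Lemma inv k : (deficit R Ks m k c0 + (xx k c0)%:R) * (Ks c1)%:R
            = (deficit R Ks m k c1 + (xx k c1)%:R) * (Ks c0)%:R.
Proof.
have a0 : (Ks c0)%:R != 0 :> R by rewrite pnatr_eq0 -lt0n Kpos.
have b0 : (Ks c1)%:R != 0 :> R by rewrite pnatr_eq0 -lt0n Kpos.
have ab0 : (Ks c0)%:R + (Ks c1)%:R != 0 :> R.
  by rewrite -natrD pnatr_eq0 addn_eq0 negb_and -!lt0n Kpos.
elim: k => [|k IH]; first by rewrite /xx /= !mulr0n !addr0 !mul0r.
rewrite !xxS /= /quantum totKE natrD.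
case: (I2 (m k)) => ->; rewrite eqxx /=; rewrite !natrD !addr0 add0r.
- set B0 := deficit R Ks m k c0 in IH *; set B1 := deficit R Ks m k c1 in IH *.
  set x0 := (xx k c0)%:R in IH *; set x1 := (xx k c1)%:R in IH *.
  set a := (Ks c0)%:R in IH a0 ab0 *; set b := (Ks c1)%:R in IH b0 ab0 *.
  have -> : (B1 + (1 - B0) * (a + b) / a * b / (a + b) + x1) * a
     = (B1 + x1) * a + (1 - B0) * b.
  by field; apply/andP.
  move: IH; lra.
- set B0 := deficit R Ks m k c0 in IH *; set B1 := deficit R Ks m k c1 in IH *.
  set x0 := (xx k c0)%:R in IH *; set x1 := (xx k c1)%:R in IH *.
  set a := (Ks c0)%:R in IH a0 ab0 *; set b := (Ks c1)%:R in IH b0 ab0 *.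
  have -> : (B0 + (1 - B1) * (a + b) / b * a / (a + b) + x0) * b
     = (B0 + x0) * b + (1 - B1) * a by field; apply/andP.
  move: IH; lra.
Qed.

Hypothesis hm : valid_run R Ks m.

Lemma bnd k : (k <= totK Ks)%N -> forall n, 0 <= deficit R Ks m k n <= 1.
Proof.
elim: k => [|k IH] Hk n; first by rewrite /= lexx ler01.
have Hk' : (k < totK Ks)%N by [].
have Kp : (0 < totK Ks)%N by rewrite totKE addn_gt0 Kpos.
rewrite /=; case: eqP => [_|_]; first by rewrite lexx ler01.
have /andP [l0 l1] := IH (ltnW Hk') n.
have /andP [_ m1] := IH (ltnW Hk') (m k).
have hv := hm Hk' n.
move: hv; rewrite /quantum.
set Bm := deficit R Ks m k (m k); set Bn := deficit R Ks m k n => hv.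
set Km := (Ks (m k))%:R; set Kn := (Ks n)%:R; set K := (totK Ks)%:R.
have Kmp : 0 < Km by rewrite ltr0n Kpos.
have Knp : 0 < Kn by rewrite ltr0n Kpos.
have KP : 0 < K by rewrite ltr0n.
have Qp : 0 <= (1 - Bm) * K / Km.
  by rewrite divr_ge0 ?mulr_ge0 ?subr_ge0 // ltW.
have r0 : 0 <= Kn / K by rewrite divr_ge0 // ltW.
have e : (1 - Bn) * K / Kn * (Kn / K) = 1 - Bn.
  by field; rewrite ?lt0r_neq0.
have := ler_wpM2r r0 hv; rewrite e => h.
rewrite -mulrA; apply/andP; split.
  by rewrite addr_ge0 // mulr_ge0.
by rewrite -lerBrDl.
Qed.

Lemma final : xx (totK Ks) c0 = Ks c0 /\ xx (totK Ks) c1 = Ks c1.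
Proof.
have hsum : (xx (totK Ks) c0 + xx (totK Ks) c1)%N = totK Ks.
  rewrite /xx -{3}(size_iota 0 (totK Ks)) -(count_predC (fun k' => m k' == c0)).
  congr addn; apply: eq_count => i /=; by case: (I2 (m i)) => ->.
have E := inv (totK Ks).
have /andP [B0a B0b] := bnd (leqnn _) c0.
have /andP [B1a B1b] := bnd (leqnn _) c1.
move: E B0a B0b B1a B1b.
set B0 := deficit R Ks m _ c0; set B1 := deficit R Ks m _ c1.
move: hsum.
set x0 := xx _ c0; set x1 := xx _ c1 => hsum.
rewrite totKE in hsum.
have ap := Kpos c0; have bp := Kpos c1.
set a := Ks c0; set b := Ks c1.
move=> E B0a B0b B1a B1b.
have ar : 0 < a%:R :> R by rewrite ltr0n.
have br : 0 < b%:R :> R by rewrite ltr0n.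
case: (ltngtP x0 a) => h.
- exfalso.
  have h1 : (b + 1 <= x1)%N by lia.
  have h0 : (x0 + 1 <= a)%N by lia.
  have h1r : b%:R + 1 <= x1%:R :> R by rewrite natr1 ler_nat -addn1.
  have h0r : x0%:R + 1 <= a%:R :> R by rewrite natr1 ler_nat -addn1.
  have x0p : 0 <= x0%:R :> R by [].
  have p1 : 0 <= (1 - B0) * b%:R :> R by apply: mulr_ge0; [rewrite subr_ge0|apply: ltW].
  have p2 : 0 <= (a%:R - x0%:R - 1) * b%:R :> R by apply: mulr_ge0; [lra|apply: ltW].
  have p3 : 0 <= B1 * a%:R :> R by apply: mulr_ge0 => //; apply: ltW.
  have p4 : 0 <= (x1%:R - b%:R - 1) * a%:R :> R by apply: mulr_ge0; [lra|apply: ltW].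
  clear -E p1 p2 p3 p4 ar br; nra.
- exfalso.
  have h1 : (x1 + 1 <= b)%N by lia.
  have h0 : (a + 1 <= x0)%N by lia.
  have h1r : x1%:R + 1 <= b%:R :> R by rewrite natr1 ler_nat -addn1.
  have h0r : a%:R + 1 <= x0%:R :> R by rewrite natr1 ler_nat -addn1.
  have x1p : 0 <= x1%:R :> R by [].
  have p1 : 0 <= (1 - B1) * a%:R :> R by apply: mulr_ge0; [rewrite subr_ge0|apply: ltW].
  have p2 : 0 <= (b%:R - x1%:R - 1) * a%:R :> R by apply: mulr_ge0; [lra|apply: ltW].
  have p3 : 0 <= B0 * b%:R :> R by apply: mulr_ge0 => //; apply: ltW.
  have p4 : 0 <= (x0%:R - a%:R - 1) * b%:R :> R by apply: mulr_ge0; [lra|apply: ltW].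
  clear -E p1 p2 p3 p4 ar br; nra.
- split => //; lia.
Qed.

End S.

Theorem mainTheorem3 (R : realFieldType) (Ks : 'I_2 -> nat)
    (Kpos : forall n, (0 < Ks n)%N)
    (K12 : (Ks (@Ordinal 2 1 is_true_true) <= Ks (@Ordinal 2 0 is_true_true))%N)
    (m : nat -> 'I_2) (hm : valid_run R Ks m) :
  forall n : 'I_2, xcount m n (totK Ks).-1 = Ks n.
Proof.
move=> n.
have Kp : (0 < totK Ks)%N by rewrite totKE addn_gt0 Kpos.
have -> : xcount m n (totK Ks).-1 = xx m (totK Ks) n by rewrite /xcount prednK.
have [h0 h1] := final Kpos hm.
by case: (I2 n) => ->.
Qed.
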